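(* Let $M\in L^1(0,1)$ with $M\ge0$ a.e., and let $$Q=\Big\{u\in\mathcal C^1([0,1]):\ |u'(t)-u'(s)|\le\int_s^tM(r)\,dr\ \text{whenever }0\le s\le t\le1\Big\}.$$ Then $Q$ is closed in $\mathcal C([0,1])$ with the maximum norm topology. Moreover, if $u_n\in Q$ for all $n\in\mathbb N$ and $u_n\to u$ uniformly on $[0,1]$, then some subsequence $\{u_{n_k}\}$ converges to $u$ in the $\mathcal C^1$ norm. *)

(* Defs.v *)
From HB Require Import structures.
From mathcomp Require Import all_boot all_order all_algebra.
From mathcomp Require Import all_classical all_reals all_analysis.
Set Implicit Arguments. Unset Strict Implicit. Unset Printing Implicit Defensive.
Import Order.TTheory GRing.Theory Num.Theory.
Import numFieldNormedType.Exports.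
Local Open Scope classical_set_scope.
Local Open Scope ring_scope.

Definition C1on01 {R : realType} (u du : R -> R) : Prop :=
  (forall t, t \in `[0, 1] ->
     (fun h => h^-1 * (u (t + h) - u t))
       @ within [set h | t + h \in `[0, 1]] 0^' --> du t)
  /\ {within `[0, 1], continuous du}.

Definition inQ {R : realType} (M : R -> R) (u du : R -> R) : Prop :=
  C1on01 u du /\
  forall s t, 0 <= s -> s <= t -> t <= 1 ->
    ((`|du t - du s|)%:E <=
       \int[@lebesgue_measure R]_(r in `[s, t]) (M r)%:E)%E.

Definition unif_cvg01 {R : realType} (f : nat -> R -> R) (g : R -> R) : Prop :=
  forall e : R, 0 < e ->
    exists N : nat, forall n, (N <= n)%N ->
      forall t, t \in `[0, 1] -> `|f n t - g t| < e.

(* Main.v *)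
Require Import Defs.
From HB Require Import structures.
From mathcomp Require Import all_boot all_order all_algebra.
From mathcomp Require Import all_classical all_reals all_analysis.
Import Order.TTheory GRing.Theory Num.Theory.
Import numFieldNormedType.Exports.
Local Open Scope classical_set_scope.
Local Open Scope ring_scope.
From mathcomp Require Import ring lra.
Set Implicit Arguments. Unset Strict Implicit. Unset Printing Implicit Defensive.

Section S.
Variable R : realType.
Lemma near_withinx (S : set R) (x : R) (P : R -> Prop) :
  (\forall h \near within S (nbhs x), P h) <-> exists2 d : R, 0 < d & forall y, `|x - y| < d -> S y -> P y.
Proof.
split.
- by move=> /nbhs_ballP [d d0 Hd]; exists d.
- move=> [d d0 Hd]; apply/nbhs_ballP; exists d => // h /= hd Sh; exact: Hd.
Qed.
Lemma near_within0 (S : set R) (P : R -> Prop) :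
  (\forall h \near within S 0^', P h) <-> exists2 d : R, 0 < d & forall h, `|h| < d -> h != 0 -> S h -> P h.
Proof.
split.
- move=> /nbhs_ballP [d d0 Hd]; exists d => //; move=> h hd h0 Sh.
  apply: Hd => //. by rewrite /ball /= sub0r normrN.
- move=> [d d0 Hd]; apply/nbhs_ballP; exists d => // h /=.
  rewrite /ball /= sub0r normrN => hd h0 Sh; exact: Hd.
Qed.
Lemma near_oo (P : nat -> Prop) : (\forall n \near \oo, P n) <-> exists N, forall n, (N <= n)%N -> P n.
Proof.
split. move=> [N _ HN]; exists N => n Nn; exact: HN.
move=> [N HN]; exists N => // n /= Nn; exact: HN.
Qed.
Lemma cauchy_seq (f : nat -> R) : (forall e : R, 0 < e -> exists N, forall n m, (N <= n)%N -> (N <= m)%N -> `|f n - f m| < e) -> cvg (f @ \oo).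
Proof.
move=> H; apply/cauchy_cvgP/cauchy_exP => e e0; have [N HN] := H e e0.
exists (f N); exists N => // n /= Nn.
rewrite /ball /=. by apply: HN.
Qed.

Lemma near_dnbhs0 (P : R -> Prop) :
  (\forall h \near 0^', P h) <-> exists2 d : R, 0 < d & forall h, `|h| < d -> h != 0 -> P h.
Proof.
split.
- move=> /nbhs_ballP [d d0 Hd]; exists d => //; move=> h hd h0.
  apply: Hd => //. by rewrite /ball /= sub0r normrN.
- move=> [d d0 Hd]; apply/nbhs_ballP; exists d => // h /=.
  rewrite /ball /= sub0r normrN => hd h0; exact: Hd.
Qed.

Lemma C1_eps (u du : R -> R) t : C1on01 u du -> t \in `[0, 1] ->
  forall e : R, 0 < e -> exists2 d : R, 0 < d & forall h, `|h| < d -> h != 0 ->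
   t + h \in `[0, 1] -> `|h^-1 * (u (t + h) - u t) - du t| < e.
Proof.
case=> Hd _ t01 e e0.
have /cvgrPdist_lt/(_ e e0)/near_within0 [d d0 H] := Hd t t01.
exists d => // h hd h0 th; rewrite distrC; exact: H.
Qed.
Lemma C1_cont (u du : R -> R) : C1on01 u du -> {within `[0, 1], continuous u}.
Proof.
move=> Hu; apply/subspace_continuousP => x x01.
have x01' : x \in `[0, 1] by rewrite inE.
apply/cvgrPdist_lt => e e0; apply/near_withinx.
have [d d0 H] := C1_eps Hu x01' ltr01.
have k0 : 0 < `|du x| + 1 by rewrite ltr_wpDl.
exists (Num.min d (e / (`|du x| + 1))); first by rewrite lt_min d0 divr_gt0.
move=> y; rewrite lt_min => /andP[yd ye] y01.
have [->|yx] := eqVneq y x; first by rewrite subrr normr0.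
have hx : y - x != 0 by rewrite subr_eq0.
have E : x + (y - x) = y by rewrite addrCA subrr addr0.
have := H (y - x); rewrite distrC in yd; rewrite E => /(_ yd hx).
rewrite inE => /(_ y01) Hl.
have Hl2 : `|(y - x)^-1 * (u y - u x)| < `|du x| + 1.
  apply: (le_lt_trans (y := `|(y - x)^-1 * (u y - u x) - du x| + `|du x|)).
    by rewrite -[X in `|X| <= _](subrK (du x)) ler_normD.
  by rewrite addrC ltrD2l.
have -> : u x - u y = - ((y - x) * ((y - x)^-1 * (u y - u x))).
  by rewrite mulrA divff // mul1r opprB.
rewrite normrN normrM.
rewrite distrC in ye.
have := ltr_pM (normr_ge0 _) (normr_ge0 _) ye Hl2.
by rewrite divfK // gt_eqF.
Qed.
Lemma C1_deriv (u du : R -> R) (x : R) : C1on01 u du -> x \in `]0, 1[ -> is_derive x 1 u (du x).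
Proof.
move=> Hu x01.
have x01' : x \in `[0, 1] by apply: subset_itv_oo_cc.
have /andP[x0 x1] : (0 < x) && (x < 1) by move: x01; rewrite in_itv.
have lim : (fun h : R => h^-1 *: ((u \o shift x) (h *: 1) - u x)) @ 0^' --> du x.
  apply/cvgrPdist_lt => e e0; apply/near_dnbhs0.
  have [d d0 H] := C1_eps Hu x01' e0.
  exists (Num.min d (Num.min x (1 - x))).
    by rewrite !lt_min d0 x0 subr_gt0 x1.
  move=> h; rewrite !lt_min => /and3P[hd hx h1x] h0.
  rewrite distrC /= /shift [h%:A]mulr1 (addrC h).
  apply: H => //; rewrite in_itv /=.
  move: hx h1x; rewrite !ltr_norml => /andP[? ?] /andP[? ?].
  apply/andP; split; lra.
apply: DeriveDef; first exact: cvgP lim.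
exact: cvg_lim lim.
Qed.
Lemma C1_MVT (u du : R -> R) (s t : R) : C1on01 u du -> 0 <= s -> s < t -> t <= 1 ->
  exists2 c, c \in `]s, t[ & u t - u s = du c * (t - s).
Proof.
move=> Hu s0 st t1; apply: MVT => //.
  move=> c; rewrite in_itv /= => /andP[sc ct]; apply: C1_deriv => //.
  rewrite in_itv /=; apply/andP; split; lra.
apply: continuous_subspaceW (C1_cont Hu).
move=> c; rewrite /= !in_itv /= => /andP[sc ct]; apply/andP; split; lra.
Qed.
Lemma absM (M : R -> R)
  (hM : (@lebesgue_measure R).-integrable `]0, 1[ (EFin \o M)) :
  forall e : R, 0 < e -> exists2 d : R, 0 < d & forall s t : R,
    0 <= s -> s <= t -> t <= 1 -> t - s < d ->
   (\int[@lebesgue_measure R]_(r in `[s, t]) (M r)%:E <= e%:E)%E.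
Proof.
move=> e e0.
set f := M \_ `]0, 1[.
have intf : (@lebesgue_measure R).-integrable setT (EFin \o f).
  by rewrite /f -restrict_EFin -integrable_mkcond.
have [d [d0 Hd]] := integral_normr_continuous intf e0.
exists d => // s t s0 st t1 tsd.
have sub : `]s, t[ `<=` `]0, 1[.
  move=> c; rewrite /= !in_itv /= => /andP[sc ct]; apply/andP; split; lra.
have mM := measurable_funS (measurable_itv _) sub (measurable_int _ hM).
rewrite (integral_itv_bndoo _ _ mM).
have intft : (@lebesgue_measure R).-integrable `]s, t[ (EFin \o f).
  exact: integrableS intf.
have mst : ((@lebesgue_measure R) `]s, t[%classic < d%:E)%E.
  rewrite lebesgue_measure_itv /=; case: ifP => _; rewrite ?lte_fin // -EFinB lte_fin //.
have Hlt := Hd _ (measurable_itv _) mst.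
apply: (le_trans (lee_abs _)).
have H1 := le_abse_integral lebesgue_measure (measurable_itv _) mM; apply: (le_trans H1).
have -> : (\int[@lebesgue_measure R]_(x in `]s, t[) `|(EFin \o M) x|)%E =
          (\int[@lebesgue_measure R]_(x in `]s, t[) (`|f x|)%:E)%E.
  apply: eq_integral => x; rewrite inE => xst /=.
  by rewrite /f patchE ifT // inE; apply: sub.
have fin : (\int[@lebesgue_measure R]_(x in `]s, t[) (`|f x|)%:E)%E \is a fin_num.
  rewrite ge0_fin_numE; last by apply: integral_ge0 => x _; rewrite lee_fin.
  by case/integrableP: intft => _.
rewrite -(fineK fin) lee_fin; apply: ltW; exact: Hlt.
Qed.
Lemma key (M : R -> R) (u du : R -> R) (e d : R) : inQ M u du ->
  (forall s t : R, 0 <= s -> s <= t -> t <= 1 -> t - s < d ->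
   (\int[@lebesgue_measure R]_(r in `[s, t]) (M r)%:E <= e%:E)%E) ->
  forall s t : R, 0 <= s -> s < t -> t <= 1 -> t - s < d ->
  `|(u t - u s) / (t - s) - du s| <= e /\ `|(u t - u s) / (t - s) - du t| <= e.
Proof.
move=> [Hu HQ] Hd s t s0 st t1 tsd.
have [c] := C1_MVT Hu s0 st t1; rewrite in_itv /= => /andP[sc ct] ->.
have ts0 : t - s != 0 by rewrite subr_eq0 gt_eqF.
rewrite mulfK //; split.
- rewrite -lee_fin; apply: le_trans (HQ s c s0 (ltW sc) _) _; first lra.
  apply: Hd; lra.
- rewrite distrC -lee_fin; apply: le_trans (HQ c t _ (ltW ct) t1) _; first lra.
  apply: Hd; lra.
Qed.
Lemma du_cauchy (M : R -> R)
  (hM : (@lebesgue_measure R).-integrable `]0, 1[ (EFin \o M))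
  (u du : nat -> R -> R) (v : R -> R)
  (hu : forall n, inQ M (u n) (du n)) (hcvg : unif_cvg01 u v) :
  forall e : R, 0 < e -> exists N, forall n m, (N <= n)%N -> (N <= m)%N ->
   forall t, t \in `[0, 1] -> `|du n t - du m t| < e.
Proof.
move=> e e0.
have [d d0 Hd] := absM hM (e := e / 4) (divr_gt0 e0 (ltr0n _ 4)).
pose h := Num.min (d / 2) (1 / 2).
have h0 : 0 < h by rewrite lt_min !divr_gt0.
have hd : h < d by rewrite gt_min ltr_pdivrMr // ltr_pMr // ltr1n.
have h2 : h <= 1 / 2 by rewrite ge_min lexx orbT.
have [N HN] := hcvg (e * h / 8) (divr_gt0 (mulr_gt0 e0 h0) (ltr0n _ 8)).
exists N => n m Nn Nm t t01.
have /andP[t0 t1] : (0 <= t) && (t <= 1) by move: t01; rewrite in_itv.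
have [a [b [a0 ab b1 bah tab]]] : exists a b : R, [/\ 0 <= a, a < b, b <= 1, b - a = h &
   (t = a \/ t = b)].
  have [tl|tr] := leP t (1 / 2).
    exists t, (t + h); split; [lra|lra|lra|lra|by left].
  exists (t - h), t; split; [lra|lra|lra|lra|by right].
have a01 : a \in `[0, 1] by rewrite in_itv /=; apply/andP; split; lra.
have b01 : b \in `[0, 1] by rewrite in_itv /=; apply/andP; split; lra.
have Kk : forall k, `|(u k b - u k a) / (b - a) - du k t| <= e / 4.
  move=> k; have bad : b - a < d by lra.
  have [H1 H2] := key (hu k) Hd a0 ab b1 bad.
  by case: tab => ->.
have [Hnb Hna] := (HN n Nn b b01, HN n Nn a a01).
have [Hmb Hma] := (HN m Nm b b01, HN m Nm a a01).
have E : (u n b - u n a) / (b - a) - (u m b - u m a) / (b - a) =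
   ((u n b - v b) - (u m b - v b) - (u n a - v a) + (u m a - v a)) / h.
  rewrite bah; ring.
have X : `|(u n b - v b) - (u m b - v b) - (u n a - v a) + (u m a - v a)| < e * h / 2.
  move: Hnb Hna Hmb Hma; rewrite !ltr_norml => /andP[? ?] /andP[? ?] /andP[? ?] /andP[? ?].
  apply/andP; split; lra.
have Y : `|((u n b - v b) - (u m b - v b) - (u n a - v a) + (u m a - v a)) / h| < e / 2.
  rewrite normrM normfV (gtr0_norm h0) ltr_pdivrMr //; lra.
rewrite -E in Y.
have Kn := Kk n; have Km := Kk m.
move: Y Kn Km.
set Dn := (u n b - u n a) / (b - a).
set Dm := (u m b - u m a) / (b - a).
rewrite !ltr_norml !ler_norml => /andP[? ?] /andP[? ?] /andP[? ?].
apply/andP; split; lra.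
Qed.

End S.

Unset Implicit Arguments.

Theorem lemma5 (R : realType) (M : R -> R)
  (hM : (@lebesgue_measure R).-integrable `]0, 1[ (EFin \o M))
  (hM0 : {ae @lebesgue_measure R, forall r, r \in `]0, 1[ -> 0 <= M r})
  (u : nat -> R -> R) (du : nat -> R -> R) (v : R -> R)
  (hu : forall n, inQ M (u n) (du n))
  (hcvg : unif_cvg01 u v) :
  exists dv : R -> R,
    inQ M v dv /\
    exists phi : nat -> nat, (forall k, (phi k < phi k.+1)%N) /\
      unif_cvg01 (fun k => u (phi k)) v /\
      unif_cvg01 (fun k => du (phi k)) dv.
Proof.
pose w t := lim ((fun n => du n t) @ \oo).
have wcvg : forall t, t \in `[0, 1] -> (fun n => du n t) @ \oo --> w t.
  move=> t t01; apply: cauchy_seq => e e0.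
  have [N HN] := du_cauchy hM hu hcvg e0.
  by exists N => n m Nn Nm; apply: HN.
have e2 : forall e : R, 0 < e -> 0 < e / 2 by move=> e e0; rewrite divr_gt0.
have wunif : unif_cvg01 du w.
  move=> e e0; have [N HN] := du_cauchy hM hu hcvg (e2 _ e0).
  exists N => n Nn t t01.
  have /cvgrPdist_lt/(_ (e / 2) (e2 _ e0))/near_oo [N' HN'] := wcvg t t01.
  have H1 := HN n (maxn N N') Nn (leq_maxl _ _) t t01.
  have H2 := HN' (maxn N N') (leq_maxr _ _).
  move: H1 H2; rewrite !ltr_norml => /andP[? ?] /andP[? ?].
  apply/andP; split; lra.
have wQ : forall s t, 0 <= s -> s <= t -> t <= 1 ->
    ((`|w t - w s|)%:E <= \int[@lebesgue_measure R]_(r in `[s, t]) (M r)%:E)%E.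
  move=> s t s0 st t1.
  have s01 : s \in `[0, 1] by rewrite in_itv /=; apply/andP; split; lra.
  have t01 : t \in `[0, 1] by rewrite in_itv /=; apply/andP; split; lra.
  have HQ0 := (hu 0%N).2 s t s0 st t1.
  case E: (\int[@lebesgue_measure R]_(r in `[s, t]) (M r)%:E)%E HQ0 => [r| |] HQ0.
  - rewrite lee_fin; apply/ler_addgt0Pr => eta eta0.
    have [N HN] := wunif (eta / 2) (e2 _ eta0).
    have := (hu N).2 s t s0 st t1; rewrite E lee_fin => HQ.
    have := HN N (leqnn N) t t01; have := HN N (leqnn N) s s01.
    move: HQ; rewrite !ltr_norml !ler_norml => /andP[? ?] /andP[? ?] /andP[? ?].
    apply/andP; split; lra.
  - by rewrite leey.
  - by [].
have wcont : {within `[0, 1], continuous w}.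
  apply/subspace_continuousP => x x01; apply/cvgrPdist_lt => e e0; apply/near_withinx.
  have [d d0 Hd] := absM hM (e := e / 2) (e2 _ e0).
  exists d => // y xy y01.
  have : x \in `[0, 1] by rewrite inE.
  have : y \in `[0, 1] by rewrite inE.
  rewrite !in_itv /= => /andP[y0 y1] /andP[x0 x1].
  move: xy; rewrite ltr_norml => /andP[xy1 xy2].
  have [xy'|yx'] := leP x y.
  - have H1 := wQ x y x0 xy' y1.
    have H2 := Hd x y x0 xy' y1 ltac:(lra).
    have := le_trans H1 H2; rewrite lee_fin distrC => H3.
    apply: le_lt_trans H3 _; lra.
  - have H1 := wQ y x y0 (ltW yx') x1.
    have H2 := Hd y x y0 (ltW yx') x1 ltac:(lra).
    have := le_trans H1 H2; rewrite lee_fin => H3.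
    apply: le_lt_trans H3 _; lra.
have e8 : forall e : R, 0 < e -> 0 < e / 8 by move=> e e0; rewrite divr_gt0.
have wder : forall t, t \in `[0, 1] ->
    (fun h => h^-1 * (v (t + h) - v t)) @ within [set h | t + h \in `[0, 1]] 0^' --> w t.
  move=> t t01; apply/cvgrPdist_lt => e e0; apply/near_within0.
  have [d d0 Hd] := absM hM (e := e / 2) (e2 _ e0).
  exists d => // h hd h0 th.
  have /andP[t0 t1] : (0 <= t) && (t <= 1) by move: t01; rewrite in_itv.
  have /andP[th0 th1] : (0 <= t + h) && (t + h <= 1) by move: th => /=; rewrite in_itv.
  have habs : 0 < `|h| by rewrite normr_gt0.
  have [N1 HN1] := hcvg (e * `|h| / 8) (e8 _ (mulr_gt0 e0 habs)).
  have [N2 HN2] := wunif (e / 8) (e8 _ e0).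
  pose n := maxn N1 N2.
  have K : `|h^-1 * (u n (t + h) - u n t) - du n t| <= e / 2.
    move: hd; rewrite ltr_norml => /andP[hd1 hd2].
    have [hneg|hpos] : h < 0 \/ 0 < h.
      by move: h0; rewrite neq_lt => /orP.
    - have l1 : t + h < t by lra.
      have l2 : t - (t + h) < d by lra.
      have [_ H2] := key (hu n) Hd th0 l1 t1 l2.
      have E : (u n t - u n (t + h)) / (t - (t + h)) = h^-1 * (u n (t + h) - u n t).
        have -> : t - (t + h) = - h by ring.
        by rewrite invrN mulrN -mulNr opprB mulrC.
      by rewrite E in H2.
    - have l1 : t < t + h by lra.
      have l2 : t + h - t < d by lra.
      have [H1 _] := key (hu n) Hd t0 l1 th1 l2.
      have E : (u n (t + h) - u n t) / (t + h - t) = h^-1 * (u n (t + h) - u n t).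
        have -> : t + h - t = h by ring.
        by rewrite mulrC.
      by rewrite E in H1.
  have U1 := HN1 n (leq_maxl _ _) (t + h) th.
  have U2 := HN1 n (leq_maxl _ _) t t01.
  have W := HN2 n (leq_maxr _ _) t t01.
  have Y : `|h^-1 * (v (t + h) - v t) - h^-1 * (u n (t + h) - u n t)| < e / 4.
    rewrite -mulrBr normrM normfV mulrC ltr_pdivrMr //.
    move: U1 U2; rewrite !ltr_norml => /andP[? ?] /andP[? ?].
    apply/andP; split; lra.
  move: K W Y.
  set A := h^-1 * (v (t + h) - v t).
  set B := h^-1 * (u n (t + h) - u n t).
  rewrite !ltr_norml !ler_norml => /andP[? ?] /andP[? ?] /andP[? ?].
  apply/andP; split; lra.
exists w; split; first by split => //; split.
exists (fun k => k); split => //; split => //.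
Qed.
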